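(* The $SEP$ composition $\mathbb{C}^2\otimes_{\min}\mathbb{C}^2$ exhibits dimension mismatch: its information dimension is strictly greater than $4$, whereas its operational (measurement) dimension equals $4$.
   Context: In $\mathbb{C}^2\otimes_{\min}\mathbb{C}^2$ (the $SEP$ composition of two qubits), states are the separable density operators on $\mathbb{C}^2\otimes\mathbb{C}^2$ and a measurement is a finite family of Hermitian operators $\{E_i\}$, each with $\operatorname{Tr}(E_iX)\ge0$ for every separable positive operator $X$, summing to the identity. The operational (measurement) dimension of a system is the maximal cardinality of a set of states perfectly distinguishable by a single measurement (i.e. a measurement $\{E_i\}$ with $\operatorname{Tr}(E_i\omega_j)=\delta_{ij}$). The information dimension is the maximal cardinality of a set of states that is pairwise distinguishable, i.e. for each pair $i\neq j$ there is some two-outcome measurement $\{E,\mathbf1-E\}$ with $\operatorname{Tr}(E\omega_i)=1$, $\operatorname{Tr}(E\omega_j)=0$. Dimension mismatch means the information dimension differs from the operational dimension. *)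

(* Defs.v *)
From mathcomp Require Import all_boot all_algebra.
From mathcomp Require Import reals.
From mathcomp.real_closed Require Export complex mxtens.

Set Implicit Arguments.
Unset Strict Implicit.
Unset Printing Implicit Defensive.
Import GRing.Theory Num.Theory.
Local Open Scope ring_scope.

Section QuantumDefs.
Variable R : realType.
Local Notation C := R[i].

Definition adjmx {m n : nat} (A : 'M[C]_(m, n)) : 'M[C]_(n, m) :=
  (map_mx Num.conj A)^T.

Definition hermitian {n : nat} (A : 'M[C]_n) : Prop := adjmx A = A.

Definition psd {n : nat} (A : 'M[C]_n) : Prop :=
  hermitian A /\ forall v : 'cV[C]_n, 0 <= (adjmx v *m A *m v) 0 0.

Definition density {n : nat} (A : 'M[C]_n) : Prop := psd A /\ \tr A = 1.

Definition op22 := 'M[C]_(2 * 2).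

Definition sep_state (w : op22) : Prop :=
  exists (k : nat) (p : 'I_k -> C) (a b : 'I_k -> 'M[C]_2),
    (forall l, 0 <= p l) /\ \sum_(l < k) p l = 1 /\
    (forall l, density (a l) /\ density (b l)) /\
    w = \sum_(l < k) p l *: (a l *t b l).

Definition sep_pos (X : op22) : Prop :=
  exists (k : nat) (a b : 'I_k -> 'M[C]_2),
    (forall l, psd (a l) /\ psd (b l)) /\
    X = \sum_(l < k) (a l *t b l).

(* effects of the SEP (minimal tensor product) composition *)
Definition sep_effect (E : op22) : Prop :=
  hermitian E /\ forall X, sep_pos X -> 0 <= \tr (E *m X).

Definition sep_measurement (n : nat) (E : 'I_n -> op22) : Prop :=
  (forall i, sep_effect (E i)) /\ \sum_(i < n) E i = 1%:M.

Definition perfectly_distinguishable (n : nat) (w : 'I_n -> op22) : Prop :=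
  (forall i, sep_state (w i)) /\
  exists E : 'I_n -> op22, sep_measurement E /\
    forall i j, \tr (E i *m w j) = (i == j)%:R.

Definition pairwise_distinguishable (n : nat) (w : 'I_n -> op22) : Prop :=
  (forall i, sep_state (w i)) /\
  forall i j, i != j ->
    exists E : op22, sep_effect E /\ sep_effect (1%:M - E) /\
      \tr (E *m w i) = 1 /\ \tr (E *m w j) = 0.

Definition operational_dim_eq (d : nat) : Prop :=
  (exists w : 'I_d -> op22, perfectly_distinguishable w) /\
  (forall (n : nat) (w : 'I_n -> op22), perfectly_distinguishable w -> (n <= d)%N).

Definition information_dim_gt (d : nat) : Prop :=
  exists (n : nat) (w : 'I_n -> op22), (d < n)%N /\ pairwise_distinguishable w.

End QuantumDefs.

(* Main.v *)
Require Import Defs.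
From mathcomp Require Import all_boot all_algebra.
From mathcomp Require Import reals.
From mathcomp Require Import all_order.
From mathcomp.real_closed Require Import complex mxtens.
From mathcomp Require Import ring lra.
Require Import Defs.
Import Order.TTheory GRing.Theory Num.Theory.
Local Open Scope ring_scope. Local Open Scope complex_scope.

Lemma conjE {R : realType} (x : R[i]) : Num.conj x = conjc x.
Proof. reflexivity. Qed.

Lemma lift00 : (lift ord0 ord0 : 'I_2) = 1.
Proof. by apply: val_inj. Qed.

Lemma qf2 {R : realType} (a : 'M[R[i]]_2) (v : 'cV[R[i]]_2) :
 (adjmx v *m a *m v) 0 0 = conjc (v 0 0) * a 0 0 * v 0 0 + conjc (v 0 0) * a 0 1 * v 1 0
   + conjc (v 1 0) * a 1 0 * v 0 0 + conjc (v 1 0) * a 1 1 * v 1 0.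
Proof.
rewrite /adjmx !mxE !big_ord_recl !big_ord0 !mxE !big_ord_recl !big_ord0 !mxE !lift00 /= !conjE.
ring.
Qed.

Definition cv2 {R : realType} (c0 c1 : R[i]) : 'cV[R[i]]_2 := \col_(i < 2) [:: c0; c1]`_i.

Lemma cv2_0 {R : realType} (c0 c1 : R[i]) : cv2 c0 c1 0 0 = c0.
Proof. by rewrite mxE. Qed.
Lemma cv2_1 {R : realType} (c0 c1 : R[i]) : cv2 c0 c1 1 0 = c1.
Proof. by rewrite mxE. Qed.

Lemma herm2 {R : realType} (a : 'M[R[i]]_2) : hermitian a -> forall i j, conjc (a j i) = a i j.
Proof. rewrite /hermitian => H i j. by rewrite -[in RHS]H /adjmx !mxE. Qed.

Lemma psd2_bloch {R : realType} (a : 'M[R[i]]_2) : psd a -> exists al be x y : R,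
  [/\ a 0 0 = al%:C, a 1 1 = be%:C, a 0 1 = x +i* y, a 1 0 = x -i* y &
  [/\ 0 <= al, 0 <= be & x^+2 + y^+2 <= al*be]].
Proof.
case=> Hh Hq.
have h00 := @herm2 _ _ Hh 0 0; have h11 := @herm2 _ _ Hh 1 1; have h01 := @herm2 _ _ Hh 0 1.
have q1 := Hq (cv2 1 0); have q2 := Hq (cv2 0 1).
have q3 := Hq (cv2 (a 1 1) (- conjc (a 0 1))); have q4 := Hq (cv2 (a 0 1) (- a 0 0)).
have q5 := Hq (cv2 1 (- conjc (a 0 1))).
rewrite !qf2 !cv2_0 !cv2_1 in q1 q2 q3 q4 q5.
move: h00 h11 h01 q1 q2 q3 q4 q5.
case: (a 0 0) => p q; case: (a 1 1) => r s; case: (a 0 1) => x y; case: (a 1 0) => u w.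
simpc => _ _ [-> /eqP]; rewrite eqr_oppLR => /eqP ->.
move=> /andP[/eqP -> hp] /andP[/eqP -> hr] /andP[_ h3] /andP[_ h4] /andP[_ h5].
exists p, r, x, y; split => //.
split => //.
have [p0|pp] := eqVneq p 0.
  subst p. nra.
have pp' : 0 < p by rewrite lt0r pp hp.
nra.
Qed.

Lemma c0E {R : realType} : (0 : R[i]) = 0 +i* 0. Proof. by []. Qed.
Lemma c1E {R : realType} : (1 : R[i]) = 1 +i* 0. Proof. by []. Qed.
Lemma cRE {R : realType} (k : R) : k%:C = k +i* 0. Proof. by []. Qed.
Ltac cnorm := rewrite ?c0E ?c1E ?cRE; simpc.

Lemma ord2P (i : 'I_2) : i = 0 \/ i = 1.
Proof. case: i => [[|[|//]]] H; [left|right]; exact: val_inj. Qed.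

Lemma mx2P {R : realType} (A B : 'M[R[i]]_2) : A 0 0 = B 0 0 -> A 0 1 = B 0 1 ->
  A 1 0 = B 1 0 -> A 1 1 = B 1 1 -> A = B.
Proof.
move=> h1 h2 h3 h4; apply/matrixP => i j.
by case: (ord2P i) => ->; case: (ord2P j) => ->.
Qed.

Definition mk2 {R : realType} (a b c d : R[i]) : 'M[R[i]]_2 :=
  \matrix_(i < 2, j < 2) (nth [::] [:: [:: a; b]; [:: c; d]] i)`_j.

Lemma mk2E {R : realType} (a b c d : R[i]) :
  [/\ mk2 a b c d 0 0 = a, mk2 a b c d 0 1 = b, mk2 a b c d 1 0 = c & mk2 a b c d 1 1 = d].
Proof. by rewrite !mxE. Qed.

Lemma tr2 {R : realType} (A : 'M[R[i]]_2) : \tr A = A 0 0 + A 1 1.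
Proof. by rewrite /mxtrace !big_ord_recl big_ord0 lift00 addr0. Qed.

Lemma tr2mul {R : realType} (A B : 'M[R[i]]_2) :
  \tr (A *m B) = A 0 0 * B 0 0 + A 0 1 * B 1 0 + A 1 0 * B 0 1 + A 1 1 * B 1 1.
Proof. rewrite tr2 !mxE !big_ord_recl !big_ord0 !lift00; ring. Qed.

Lemma bloch_psd {R : realType} (a : 'M[R[i]]_2) (al be x y : R) :
  a 0 0 = al%:C -> a 1 1 = be%:C -> a 0 1 = x +i* y -> a 1 0 = x -i* y ->
  0 <= al -> 0 <= be -> x^+2 + y^+2 <= al*be -> psd a.
Proof.
move=> h00 h11 h01 h10 hal hbe hxy; split.
  apply: mx2P; rewrite /adjmx !mxE !conjE ?h00 ?h11 ?h01 ?h10; by simpc.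
move=> v; rewrite qf2 h00 h11 h01 h10.
case: (v 0 0) => p q; case: (v 1 0) => r s; cnorm.
apply/andP; split; first by apply/eqP; ring.
have [a0|ap] := eqVneq al 0.
  subst al. have hx : x = 0 by nra. have hy : y = 0 by nra. subst x y. nra.
have ap' : 0 < al by rewrite lt0r ap hal.
set Q := (X in 0 <= X).
have e : al * Q = (al * p + x*r - y*s)^+2 + (al*q + x*s + y*r)^+2 + (al*be - (x^+2+y^+2))*(r^+2+s^+2).
  rewrite /Q; ring.
have : 0 <= al * Q.
  rewrite e; apply: addr_ge0; first by apply: addr_ge0; apply: sqr_ge0.
  by apply: mulr_ge0; [rewrite subr_ge0 | apply: addr_ge0; apply: sqr_ge0].
by rewrite pmulr_rge0.
Qed.

Definition sX {R : realType} : 'M[R[i]]_2 := mk2 0 1 1 0.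
Definition sY {R : realType} : 'M[R[i]]_2 := mk2 0 (- 'i) 'i 0.
Definition sZ {R : realType} : 'M[R[i]]_2 := mk2 1 0 0 (-1).

Ltac ceq := cnorm; congr (_ +i* _); ring.

Lemma bloch_tr {R : realType} (a : 'M[R[i]]_2) : psd a -> exists A0 A1 A2 A3 : R,
  [/\ \tr a = A0%:C, \tr (sX *m a) = A1%:C, \tr (sY *m a) = A2%:C,
      \tr (sZ *m a) = A3%:C & 0 <= A0 /\ A1^+2 + A2^+2 + A3^+2 <= A0^+2].
Proof.
move=> /psd2_bloch [al [be [x [y [h00 h11 h01 h10 [hal hbe hxy]]]]]].
exists (al + be), (2 * x), (- (2 * y)), (al - be).
rewrite tr2 !tr2mul /sX /sY /sZ /mk2 !mxE /= h00 h11 h01 h10; split; try ceq.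
split; [exact: addr_ge0 | nra].
Qed.

Section Tens.
Variable R : realType.
Local Notation C := (R[i]).

Lemma tr_tens m n (A : 'M[C]_m) (B : 'M[C]_n) : \tr (A *t B) = \tr A * \tr B.
Proof. by rewrite /mxtrace mulr_sum; apply: eq_bigr => k _; rewrite mxE. Qed.

Lemma trTT m n (P a : 'M[C]_m) (Q b : 'M[C]_n) :
  \tr ((P *t Q) *m (a *t b)) = \tr (P *m a) * \tr (Q *m b).
Proof. by rewrite tensmx_mul tr_tens. Qed.

Lemma tensDl m n (A B : 'M[C]_m) (D : 'M[C]_n) : (A + B) *t D = A *t D + B *t D.
Proof. by apply/matrixP => i j; rewrite !mxE mulrDl. Qed.
Lemma tensDr m n (A : 'M[C]_m) (B D : 'M[C]_n) : A *t (B + D) = A *t B + A *t D.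
Proof. by apply/matrixP => i j; rewrite !mxE mulrDr. Qed.
Lemma tensZl m n c (A : 'M[C]_m) (D : 'M[C]_n) : (c *: A) *t D = c *: (A *t D).
Proof. by apply/matrixP => i j; rewrite !mxE mulrA. Qed.
Lemma tensZr m n c (A : 'M[C]_m) (D : 'M[C]_n) : A *t (c *: D) = c *: (A *t D).
Proof. by apply/matrixP => i j; rewrite !mxE mulrCA. Qed.

Lemma tens11 m n : (1%:M : 'M[C]_m) *t (1%:M : 'M[C]_n) = 1%:M.
Proof.
apply/matrixP => i j.
case: (mxtens_indexP i) => i1 i2; case: (mxtens_indexP j) => j1 j2.
rewrite tensmxE !mxE (can_eq (@mxtens_indexK m n)) xpair_eqE.
by case: (i1 == j1); case: (i2 == j2); rewrite /= ?mulr1 ?mulr0 ?mul0r.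
Qed.

Lemma adjD m (A B : 'M[C]_m) : adjmx (A + B) = adjmx A + adjmx B.
Proof. by apply/matrixP => i j; rewrite !mxE !conjE rmorphD. Qed.
Lemma adjZR m (k : R) (A : 'M[C]_m) : adjmx (k%:C *: A) = k%:C *: adjmx A.
Proof. by apply/matrixP => i j; rewrite !mxE !conjE rmorphM /= oppr0. Qed.
Lemma adjT m n (A : 'M[C]_m) (B : 'M[C]_n) : adjmx (A *t B) = adjmx A *t adjmx B.
Proof. by apply/matrixP => i j; rewrite !mxE !conjE rmorphM. Qed.
Lemma adj1 m : adjmx (1%:M : 'M[C]_m) = 1%:M.
Proof. by apply/matrixP => i j; rewrite !mxE !conjE eq_sym conjc_nat. Qed.

End Tens.

Lemma herm_sX {R : realType} : adjmx (@sX R) = sX.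
Proof. apply: mx2P; rewrite /sX /mk2 !mxE /= !conjE; by cnorm. Qed.
Lemma herm_sY {R : realType} : adjmx (@sY R) = sY.
Proof. apply: mx2P; rewrite /sY /mk2 !mxE /= !conjE; by cnorm. Qed.
Lemma herm_sZ {R : realType} : adjmx (@sZ R) = sZ.
Proof. apply: mx2P; rewrite /sZ /mk2 !mxE /= !conjE; by cnorm. Qed.

Definition Ed {R : realType} (d1 d2 d3 : R) : op22 R :=
  (1/2 : R)%:C *: (1%:M *t 1%:M + d1%:C *: (sX *t sX) + d2%:C *: (sY *t sY) + d3%:C *: (sZ *t sZ)).

Lemma trEd {R : realType} (d1 d2 d3 : R) (a b : 'M[R[i]]_2) :
  \tr (Ed d1 d2 d3 *m (a *t b)) = (1/2 : R)%:C * (\tr a * \tr b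
   + d1%:C * (\tr (sX *m a) * \tr (sX *m b)) + d2%:C * (\tr (sY *m a) * \tr (sY *m b))
   + d3%:C * (\tr (sZ *m a) * \tr (sZ *m b))).
Proof.
by rewrite /Ed -scalemxAl mxtraceZ !mulmxDl !mxtraceD -!scalemxAl !mxtraceZ !trTT !mul1mx.
Qed.

Lemma herm_Ed {R : realType} (d1 d2 d3 : R) : hermitian (Ed d1 d2 d3).
Proof.
by rewrite /hermitian /Ed adjZR !adjD !adjZR !adjT adj1 herm_sX herm_sY herm_sZ.
Qed.

Lemma sep_effect_crit {R : realType} (E : op22 R) : hermitian E ->
  (forall a b, psd a -> psd b -> 0 <= \tr (E *m (a *t b))) -> sep_effect E.
Proof.
move=> hE hp; split => // X [k [a [b [hab ->]]]].
rewrite mulmx_sumr raddf_sum; apply: sumr_ge0 => l _.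
by case: (hab l) => ha hb; apply: hp.
Qed.

Lemma cs3 {R : realType} (A0 u1 u2 u3 B0 B1 B2 B3 : R) :
  0 <= A0 -> u1^+2 + u2^+2 + u3^+2 <= A0^+2 ->
  0 <= B0 -> B1^+2 + B2^+2 + B3^+2 <= B0^+2 ->
  0 <= A0 * B0 + (u1 * B1 + u2 * B2 + u3 * B3).
Proof.
move=> hA0 hu hB0 hB.
have cs : (u1 * B1 + u2 * B2 + u3 * B3)^+2 <= (u1^+2 + u2^+2 + u3^+2) * (B1^+2 + B2^+2 + B3^+2).
  rewrite -subr_ge0.
  have -> : (u1^+2 + u2^+2 + u3^+2) * (B1^+2 + B2^+2 + B3^+2) - (u1 * B1 + u2 * B2 + u3 * B3)^+2
    = (u1 * B2 - u2 * B1)^+2 + (u1 * B3 - u3 * B1)^+2 + (u2 * B3 - u3 * B2)^+2 by ring.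
  by rewrite !addr_ge0 ?sqr_ge0.
have h : (u1 * B1 + u2 * B2 + u3 * B3)^+2 <= A0^+2 * B0^+2.
  apply: le_trans cs _; apply: ler_pM => //; by rewrite !addr_ge0 ?sqr_ge0.
have hAB : 0 <= A0 * B0 by apply: mulr_ge0.
nra.
Qed.

Lemma cs_aux {R : realType} (A0 A1 A2 A3 B0 B1 B2 B3 d1 d2 d3 : R) :
  0 <= A0 -> A1^+2 + A2^+2 + A3^+2 <= A0^+2 ->
  0 <= B0 -> B1^+2 + B2^+2 + B3^+2 <= B0^+2 ->
  d1^+2 <= 1 -> d2^+2 <= 1 -> d3^+2 <= 1 ->
  0 <= A0 * B0 + d1 * A1 * B1 + d2 * A2 * B2 + d3 * A3 * B3.
Proof.
move=> hA0 hA hB0 hB h1 h2 h3.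
have -> : A0 * B0 + d1 * A1 * B1 + d2 * A2 * B2 + d3 * A3 * B3 =
  A0 * B0 + ((d1 * A1) * B1 + (d2 * A2) * B2 + (d3 * A3) * B3) by ring.
apply: cs3 => //; apply: le_trans hA; rewrite !exprMn.
by apply: lerD; [apply: lerD|]; apply: ler_piMl => //; apply: sqr_ge0.
Qed.

Lemma half_C {R : realType} : (1/2 : R)%:C = (1/2 : R[i]).
Proof. by rewrite rmorphM rmorphV ?unitfE ?pnatr_eq0 // rmorph1 rmorph_nat. Qed.

Lemma effEd {R : realType} (d1 d2 d3 : R) : d1^+2 <= 1 -> d2^+2 <= 1 -> d3^+2 <= 1 ->
  sep_effect (Ed d1 d2 d3).
Proof.
move=> h1 h2 h3; apply: sep_effect_crit; first exact: herm_Ed.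
move=> a b /bloch_tr [A0 [A1 [A2 [A3 [ta tx ty tz [hA0 hA]]]]]].
move=> /bloch_tr [B0 [B1 [B2 [B3 [tb ux uy uz [hB0 hB]]]]]].
rewrite trEd ta tx ty tz tb ux uy uz; cnorm => /=.
apply: mulr_ge0; first by rewrite invr_ge0 ler0n.
rewrite !mulrA; exact: cs_aux.
Qed.

Lemma Ed_compl {R : realType} (d1 d2 d3 : R) : 1%:M - Ed d1 d2 d3 = Ed (-d1) (-d2) (-d3).
Proof.
apply/matrixP => i j; rewrite /Ed -tens11 !mxE !rmorphN half_C.
by field.
Qed.

Section States.
Variable R : realType.
Local Notation C := (R[i]).
Local Notation h := ((1/2 : R)%:C).

Definition st (k : nat) : 'M[C]_2 :=
  match k with
  | 0 => mk2 1 0 0 0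
  | 1 => mk2 0 0 0 1
  | 2 => mk2 h h h h
  | 3 => mk2 h (- h) (- h) h
  | _ => mk2 h (0 +i* (- (1/2))) (0 +i* (1/2)) h
  end.

Definition bx (k : nat) : R := match k with 2 => 1 | 3 => -1 | _ => 0 end.
Definition by_ (k : nat) : R := match k with 0 | 1 | 2 | 3 => 0 | _ => 1 end.
Definition bz (k : nat) : R := match k with 0 => 1 | 1 => -1 | _ => 0 end.

Lemma st_tr k : [/\ \tr (st k) = 1, \tr (sX *m st k) = (bx k)%:C,
  \tr (sY *m st k) = (by_ k)%:C & \tr (sZ *m st k) = (bz k)%:C].
Proof.
case: k => [|[|[|[|k]]]]; rewrite tr2 !tr2mul /sX /sY /sZ /st /mk2 !mxE /=;
  split; cnorm; try (congr (_ +i* _); lra).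
Qed.

Lemma st_density k : density (st k).
Proof.
split; last by case: (st_tr k).
case: k => [|[|[|[|k]]]]; rewrite /st.
- apply: (@bloch_psd _ _ 1 0 0 0); rewrite /mk2 ?mxE /=; try (cnorm; try (congr (_ +i* _); lra)); try nra.
- apply: (@bloch_psd _ _ 0 1 0 0); rewrite /mk2 ?mxE /=; try (cnorm; try (congr (_ +i* _); lra)); try nra.
- apply: (@bloch_psd _ _ (1/2) (1/2) (1/2) 0); rewrite /mk2 ?mxE /=; try (cnorm; try (congr (_ +i* _); lra)); try nra.
- apply: (@bloch_psd _ _ (1/2) (1/2) (-(1/2)) 0); rewrite /mk2 ?mxE /=; try (cnorm; try (congr (_ +i* _); lra)); try nra.
- apply: (@bloch_psd _ _ (1/2) (1/2) 0 (-(1/2))); rewrite /mk2 ?mxE /=; try (cnorm; try (congr (_ +i* _); lra)); try nra.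
Qed.

End States.

Lemma sep_state_tens {R : realType} (a b : 'M[R[i]]_2) :
  density a -> density b -> sep_state (a *t b).
Proof.
move=> ha hb; exists 1%N, (fun _ => 1), (fun _ => a), (fun _ => b).
split => //; split; first by rewrite big_ord1.
by split => //; rewrite big_ord1 scale1r.
Qed.

Lemma trEd_st {R : realType} (d1 d2 d3 : R) k l :
  \tr (Ed d1 d2 d3 *m (st R k *t st R l)) =
  (1/2 * (1 + d1 * (bx R k * bx R l) + d2 * (by_ R k * by_ R l) + d3 * (bz R k * bz R l)))%:C.
Proof.
rewrite trEd; case: (st_tr R k) => -> -> -> ->; case: (st_tr R l) => -> -> -> ->.
by cnorm; congr (_ +i* _); ring.
Qed.

Definition fa (k : nat) : nat := match k with 0 | 1 => 0 | 2 | 3 => 2 | _ => 4 end.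
Definition fb (k : nat) : nat := match k with 0 => 0 | 1 => 1 | 2 => 2 | 3 => 3 | _ => 4 end.
Definition w5 {R : realType} (i : 'I_5) : op22 R := st R (fa i) *t st R (fb i).

Lemma pair_ok {R : realType} (d1 d2 d3 : R) (i j : 'I_5) :
  d1^+2 <= 1 -> d2^+2 <= 1 -> d3^+2 <= 1 ->
  \tr (Ed d1 d2 d3 *m w5 i) = 1 -> \tr (Ed d1 d2 d3 *m w5 j) = 0 ->
  exists E : op22 R, sep_effect E /\ sep_effect (1%:M - E) /\
      \tr (E *m w5 i) = 1 /\ \tr (E *m w5 j) = 0.
Proof.
move=> h1 h2 h3 hi hj; exists (Ed d1 d2 d3); split; first exact: effEd.
split => //; rewrite Ed_compl; apply: effEd; by rewrite sqrrN.
Qed.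

Ltac solve_val := rewrite /w5 trEd_st /=; cnorm; first [reflexivity | congr (_ +i* _); lra].
Ltac sq1 := first [lra | nra].
Ltac try_d a b c := apply: (pair_ok a b c); [sq1|sq1|sq1|solve_val|solve_val].


Lemma info5 (R : realType) : information_dim_gt R 4.
Proof.
exists 5%N, w5; split => //; split.
  by move=> i; apply: sep_state_tens; apply: st_density.
move=> i j; case: i => [[|[|[|[|[|//]]]]]] Hi; case: j => [[|[|[|[|[|//]]]]]] Hj //= _.
- try_d (1:R) (1:R) (1:R).
- try_d (-1:R) (1:R) (1:R).
- try_d (1:R) (1:R) (1:R).
- try_d (1:R) (-1:R) (1:R).
- try_d (1:R) (1:R) (-1:R).
- try_d (-1:R) (1:R) (-1:R).
- try_d (1:R) (1:R) (-1:R).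
- try_d (1:R) (-1:R) (-1:R).
- try_d (1:R) (1:R) (-1:R).
- try_d (1:R) (1:R) (1:R).
- try_d (1:R) (1:R) (1:R).
- try_d (1:R) (-1:R) (1:R).
- try_d (-1:R) (1:R) (-1:R).
- try_d (-1:R) (1:R) (1:R).
- try_d (-1:R) (1:R) (1:R).
- try_d (-1:R) (-1:R) (1:R).
- try_d (1:R) (1:R) (-1:R).
- try_d (1:R) (1:R) (1:R).
- try_d (-1:R) (1:R) (1:R).
- try_d (1:R) (1:R) (1:R).
Qed.

Section Op.
Variable R : realType.
Local Notation C := (R[i]).

Lemma tr_st01 a c : (a < 2)%N -> (c < 2)%N -> \tr (st R a *m st R c) = (a == c)%:R.
Proof.
by case: a => [|[|//]] _; case: c => [|[|//]] _; rewrite tr2mul /st /mk2 !mxE /=; cnorm.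
Qed.

Lemma tr_st_psd a (x : 'M[C]_2) : (a < 2)%N -> psd x -> 0 <= \tr (st R a *m x).
Proof.
move=> ha /psd2_bloch [al [be [p [q [h00 h11 h01 h10 [hal hbe hpq]]]]]].
case: a ha => [|[|//]] _; rewrite tr2mul /st /mk2 !mxE /= h00 h11 h01 h10; cnorm => /=; done.
Qed.

Lemma eff_st a b : (a < 2)%N -> (b < 2)%N -> sep_effect (st R a *t st R b).
Proof.
move=> ha hb; apply: sep_effect_crit.
  rewrite /hermitian adjT.
  by case: (st_density R a) => [[-> _] _]; case: (st_density R b) => [[-> _] _].
move=> x y hx hy; rewrite trTT; apply: mulr_ge0; exact: tr_st_psd.
Qed.

Definition wz (i : 'I_4) : op22 R := st R (i %/ 2) *t st R (i %% 2).

Lemma st01 : st R 0 + st R 1 = 1%:M.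
Proof. apply: mx2P; rewrite /st /mk2 !mxE /=; by cnorm. Qed.

Lemma sum_wz : \sum_(i < 4) wz i = 1%:M.
Proof.
rewrite !big_ord_recl big_ord0 /wz /=.
rewrite -tens11 -st01.
apply/matrixP => i j; rewrite !mxE; ring.
Qed.

Lemma perf4 : exists w : 'I_4 -> op22 R, perfectly_distinguishable w.
Proof.
exists wz; split.
  by move=> i; apply: sep_state_tens; apply: st_density.
exists wz; split.
  split; last exact: sum_wz.
  by case=> [[|[|[|[|//]]]]] Hi; apply: eff_st.
case=> [[|[|[|[|//]]]]] Hi; case=> [[|[|[|[|//]]]]] Hj;
  rewrite /wz trTT !tr_st01 //= ?mulr1 ?mulr0 ?mul0r.
all: reflexivity.
Qed.
End Op.

Section Up.
Variable R : realType.
Local Notation C := (R[i]).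

Lemma psd1 : psd (1%:M : 'M[C]_2).
Proof. apply: (@bloch_psd _ _ 1 1 0 0); rewrite ?mxE //=.
- by rewrite oppr0.
- nra.
Qed.

Lemma psd_compl (a : 'M[C]_2) : density a -> psd (1%:M - a).
Proof.
case=> /psd2_bloch [al [be [x [y [h00 h11 h01 h10 [hal hbe hxy]]]]]].
rewrite tr2 h00 h11; cnorm => -[hab].
apply: (@bloch_psd _ _ be al (- x) (- y)); rewrite ?mxE /= ?h00 ?h11 ?h01 ?h10;
  try (cnorm; first [reflexivity | congr (_ +i* _); lra]); try nra.
Qed.

Lemma sep_pos1 (a b : 'M[C]_2) : psd a -> psd b -> sep_pos (a *t b).
Proof.
move=> ha hb; exists 1%N, (fun _ => a), (fun _ => b); split => //.
by rewrite big_ord1.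
Qed.

Lemma compl_tens (a b : 'M[C]_2) :
  (1%:M : op22 R) - a *t b = (1%:M - a) *t b + 1%:M *t (1%:M - b).
Proof. rewrite -tens11; apply/matrixP => i j; rewrite !mxE; ring. Qed.

Lemma tr_ge (E w : op22 R) : sep_effect E -> sep_state w -> \tr (E *m w) <= \tr E.
Proof.
move=> [hE hpos] [k [p [a [b [hp [hs [hab ->]]]]]]].
rewrite -[\tr E]mul1r -hs mulr_suml mulmx_sumr raddf_sum /=.
apply: ler_sum => l _; rewrite -scalemxAr mxtraceZ; apply: ler_wpM2l => //.
rewrite -subr_ge0 -{1}[E]mulmx1 -raddfB -mulmxBr compl_tens mulmxDr raddfD /=.
case: (hab l) => [ha hb].
apply: addr_ge0; apply: hpos; apply: sep_pos1.
- exact: psd_compl.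
- by case: hb.
- exact: psd1.
- exact: psd_compl.
Qed.

Lemma op_bound n (w : 'I_n -> op22 R) : perfectly_distinguishable w -> (n <= 4)%N.
Proof.
move=> [hw [E [[hE hsum] htr]]].
have : (n%:R : C) <= \tr (1%:M : op22 R).
  rewrite -hsum raddf_sum /=.
  have -> : (n%:R : C) = \sum_(i < n) \tr (E i *m w i).
    by rewrite -[in LHS](card_ord n) -sumr_const; apply: eq_bigr => i _; rewrite htr eqxx.
  by apply: ler_sum => i _; apply: tr_ge.
by rewrite mxtrace1 ler_nat.
Qed.
End Up.

Close Scope complex_scope.
Close Scope ring_scope.

Theorem corollary1 (R : realType) :
  information_dim_gt R 4 /\ operational_dim_eq R 4.
Proof.
split; first exact: info5.
split; [exact: perf4 | exact: op_bound].
Qed.
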